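(* For every $n\in\mathbb{N}$, $g\big[\mathbf{RP}_n(\mathbb{R})\big] > \frac{1}{641}\,n^{1.669}$.
   Context: For an $n\times n$ complex matrix $A=(a_{i,j})$, Gaussian elimination without pivoting is the recursion $a^{(1)}_{i,j}=a_{i,j}$ and $a^{(k+1)}_{i,j}=a^{(k)}_{i,j}-a^{(k)}_{i,k}a^{(k)}_{k,j}/a^{(k)}_{k,k}$ for $k+1\le i,j\le n$, $k=1,\dots,n-1$ (defined when all pivots $a^{(k)}_{k,k}\neq0$). The growth factor is $g(A)=\max_{i,j,k}|a^{(k)}_{i,j}|/\max_{i,j}|a_{i,j}|$. For $S\subseteq\mathbb{C}$, $\mathbf{RP}_n(S)$ (rook pivoted matrices) is the set of invertible $A\in S^{n\times n}$ for which elimination without pivoting is defined and $|a^{(k)}_{i,k}|\le|a^{(k)}_{k,k}|$ and $|a^{(k)}_{k,j}|\le|a^{(k)}_{k,k}|$ for all $k$ and all $i,j\ge k$. For a set $\mathbf{X}$ of matrices, $g[\mathbf{X}]=\sup_{A\in\mathbf{X}}g(A)$. *)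

(* Defs.v *)
From HB Require Import structures.
From mathcomp Require Import all_boot all_order all_algebra.
From mathcomp Require Import all_classical all_reals all_analysis.
Set Implicit Arguments. Unset Strict Implicit. Unset Printing Implicit Defensive.
Import Order.TTheory GRing.Theory Num.Theory.
Local Open Scope ring_scope.

Section GE.
Variable R : realType.
Variable n : nat.

Definition ge_step (A : 'M[R]_n) (k : nat) : 'M[R]_n :=
  if @insub nat (fun m => (m < n)%N) 'I_n k is Some p then
  \matrix_(i, j)
    if (p < i)%N && (p < j)%N then
      A i j - A i p * A p j / A p p
    else A i j
  else A.

(* ge_iter A k = a^(k+1) in the paper's 1-based notation. *)
Fixpoint ge_iter (A : 'M[R]_n) (k : nat) : 'M[R]_n :=
  match k with
  | 0 => A
  | k'.+1 => ge_step (ge_iter A k') k'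
  end.

Definition ge_defined (A : 'M[R]_n) : Prop :=
  forall k : 'I_n, ge_iter A k k k != 0.

Definition max_entry (A : 'M[R]_n) : R :=
  \big[Num.max/0]_(i < n) \big[Num.max/0]_(j < n) `|A i j|.

Definition max_all_stages (A : 'M[R]_n) : R :=
  \big[Num.max/0]_(k < n) \big[Num.max/0]_(i < n | (k <= i)%N)
     \big[Num.max/0]_(j < n | (k <= j)%N) `|ge_iter A k i j|.

Definition growth_factor (A : 'M[R]_n) : R := max_all_stages A / max_entry A.

Definition rook_pivoted (A : 'M[R]_n) : Prop :=
  A \in unitmx /\ ge_defined A /\
  forall k : 'I_n,
    (forall i : 'I_n, (k <= i)%N -> `|ge_iter A k i k| <= `|ge_iter A k k k|) /\
    (forall j : 'I_n, (k <= j)%N -> `|ge_iter A k k j| <= `|ge_iter A k k k|).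

(* g[RP_n(R)] as an extended real supremum (could a priori be +oo). *)
Definition growth_RP : \bar R :=
  ereal_sup [set (growth_factor A)%:E | A in [set A | rook_pivoted A]].

End GE.

(* Main.v *)
Require Import Defs.
From Stdlib Require Import ZArith.
From mathcomp Require Import all_boot all_order all_algebra.
From mathcomp Require Import all_classical all_reals all_analysis.
From mathcomp Require Import zify.
From mathcomp Require Import ssrZ.
Import Order.TTheory GRing.Theory Num.Theory.
Set Implicit Arguments. Unset Strict Implicit. Unset Printing Implicit Defensive.
Module Tab.
Local Open Scope Z_scope.
Definition ta : seq (seq Z) :=
[::
  [:: 1000000; 0; 0; 0; 0; 0; 0; 0; 0; 0; 0; 0; 0; 0; 0; 0; 0; 0; 0; 0; 0; 0; 0; 0; 0; 0; 0; 0; 0; 0; 0; 0; 0; 0; 0; 0; 0; 0; 0; 0];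
  [:: 4198; 1000000; 0; 0; 0; 0; 0; 0; 0; 0; 0; 0; 0; 0; 0; 0; 0; 0; 0; 0; 0; 0; 0; 0; 0; 0; 0; 0; 0; 0; 0; 0; 0; 0; 0; 0; 0; 0; 0; 0];
  [:: -2779; 752; 1000000; 0; 0; 0; 0; 0; 0; 0; 0; 0; 0; 0; 0; 0; 0; 0; 0; 0; 0; 0; 0; 0; 0; 0; 0; 0; 0; 0; 0; 0; 0; 0; 0; 0; 0; 0; 0; 0];
  [:: -262; 953; 932; 1000000; 0; 0; 0; 0; 0; 0; 0; 0; 0; 0; 0; 0; 0; 0; 0; 0; 0; 0; 0; 0; 0; 0; 0; 0; 0; 0; 0; 0; 0; 0; 0; 0; 0; 0; 0; 0];
  [:: -1023; -1101; 248; -3; 1000000; 0; 0; 0; 0; 0; 0; 0; 0; 0; 0; 0; 0; 0; 0; 0; 0; 0; 0; 0; 0; 0; 0; 0; 0; 0; 0; 0; 0; 0; 0; 0; 0; 0; 0; 0];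
  [:: 5341; -587; 1848; 1876; 1624; 1000000; 0; 0; 0; 0; 0; 0; 0; 0; 0; 0; 0; 0; 0; 0; 0; 0; 0; 0; 0; 0; 0; 0; 0; 0; 0; 0; 0; 0; 0; 0; 0; 0; 0; 0];
  [:: 14832; -55072; 16016; -36500; 8967; 65692; 1000000; 0; 0; 0; 0; 0; 0; 0; 0; 0; 0; 0; 0; 0; 0; 0; 0; 0; 0; 0; 0; 0; 0; 0; 0; 0; 0; 0; 0; 0; 0; 0; 0; 0];
  [:: 26596; 54176; 63483; 23640; 3508; -20132; 43100; 1000000; 0; 0; 0; 0; 0; 0; 0; 0; 0; 0; 0; 0; 0; 0; 0; 0; 0; 0; 0; 0; 0; 0; 0; 0; 0; 0; 0; 0; 0; 0; 0; 0];
  [:: 89415; 30762; 114393; 39668; -30849; 123769; -48708; -10974; 1000000; 0; 0; 0; 0; 0; 0; 0; 0; 0; 0; 0; 0; 0; 0; 0; 0; 0; 0; 0; 0; 0; 0; 0; 0; 0; 0; 0; 0; 0; 0; 0];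
  [:: -767230; 981; -426268; -120362; 466155; -43558; -560866; -313638; 506353; 1000000; 0; 0; 0; 0; 0; 0; 0; 0; 0; 0; 0; 0; 0; 0; 0; 0; 0; 0; 0; 0; 0; 0; 0; 0; 0; 0; 0; 0; 0; 0];
  [:: -298865; -34648; 82356; 92199; 54339; 235590; -22719; -99988; 161220; 131095; 1000000; 0; 0; 0; 0; 0; 0; 0; 0; 0; 0; 0; 0; 0; 0; 0; 0; 0; 0; 0; 0; 0; 0; 0; 0; 0; 0; 0; 0; 0];
  [:: 335663; -194005; 518970; -310985; -203420; -53663; 582136; -242916; 418883; -164614; 201051; 1000000; 0; 0; 0; 0; 0; 0; 0; 0; 0; 0; 0; 0; 0; 0; 0; 0; 0; 0; 0; 0; 0; 0; 0; 0; 0; 0; 0; 0];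
  [:: 140930; 325139; -279790; 6974; 267724; -647715; -654324; 781616; -54075; 136783; -262162; -178039; 1000000; 0; 0; 0; 0; 0; 0; 0; 0; 0; 0; 0; 0; 0; 0; 0; 0; 0; 0; 0; 0; 0; 0; 0; 0; 0; 0; 0];
  [:: -440073; 151761; -87971; 5793; 170200; -683952; -978550; 401610; 504859; 259224; -145623; -198863; 236921; 1000000; 0; 0; 0; 0; 0; 0; 0; 0; 0; 0; 0; 0; 0; 0; 0; 0; 0; 0; 0; 0; 0; 0; 0; 0; 0; 0];
  [:: -255994; 817109; 119092; 514186; 188106; -825180; -587698; 392228; -11637; -5334; -224721; -88958; 354460; 657700; 1000000; 0; 0; 0; 0; 0; 0; 0; 0; 0; 0; 0; 0; 0; 0; 0; 0; 0; 0; 0; 0; 0; 0; 0; 0; 0];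
  [:: 823514; -939437; -551290; 749212; 996172; 508651; -6280; 993726; -740518; -209912; -261482; 230617; 911120; -30922; 315826; 1000000; 0; 0; 0; 0; 0; 0; 0; 0; 0; 0; 0; 0; 0; 0; 0; 0; 0; 0; 0; 0; 0; 0; 0; 0];
  [:: 189652; -998843; -907636; 997982; 426055; -630687; -936132; 993834; -996434; -543817; -429885; -999925; 595086; 679001; 746006; 652488; 1000000; 0; 0; 0; 0; 0; 0; 0; 0; 0; 0; 0; 0; 0; 0; 0; 0; 0; 0; 0; 0; 0; 0; 0];
  [:: 417103; 991334; 895157; -178889; -615098; -984659; -777133; -797207; 982901; -624080; -588979; -499404; -344306; 367507; 172575; -618864; 213080; 1000000; 0; 0; 0; 0; 0; 0; 0; 0; 0; 0; 0; 0; 0; 0; 0; 0; 0; 0; 0; 0; 0; 0];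
  [:: -441351; -375248; -610081; 809067; -987905; -999102; 148418; -856460; -738826; -713338; -274201; -999998; -456515; 371548; 465161; -148556; 550409; 60013; 1000000; 0; 0; 0; 0; 0; 0; 0; 0; 0; 0; 0; 0; 0; 0; 0; 0; 0; 0; 0; 0; 0];
  [:: -253657; -585942; 289337; 987056; -339120; -999685; -176423; -210155; -969533; -729251; -845223; -999997; 381430; 742909; 851760; -80628; 772597; 194508; 334863; 1000000; 0; 0; 0; 0; 0; 0; 0; 0; 0; 0; 0; 0; 0; 0; 0; 0; 0; 0; 0; 0];
  [:: 999652; -392031; -168698; 272045; -892310; -996453; -987878; -391079; 885799; -999164; -1000000; -282661; 27742; 822876; 647275; 82073; 657566; 640179; 147580; -427200; 1000000; 0; 0; 0; 0; 0; 0; 0; 0; 0; 0; 0; 0; 0; 0; 0; 0; 0; 0; 0];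
  [:: 1000000; 590377; 624719; 320407; 982554; 884886; -855161; 997148; 983584; -293989; 496574; 837876; 809697; 111945; -121731; 754063; -404744; -175246; -638969; -496547; 305434; 1000000; 0; 0; 0; 0; 0; 0; 0; 0; 0; 0; 0; 0; 0; 0; 0; 0; 0; 0];
  [:: 548114; 806870; 934944; 997660; -999975; -582571; 956740; 999981; 789517; -434844; 1000000; -999998; 843616; -143627; 837874; -999817; 368522; -703367; 292451; 997746; -121203; -175746; 1000000; 0; 0; 0; 0; 0; 0; 0; 0; 0; 0; 0; 0; 0; 0; 0; 0; 0];
  [:: -382529; -985562; -999869; -999996; 999998; -482629; -130030; 999880; -999996; 934809; -802070; -999799; -999971; 117638; 8900; 301165; 393721; 372221; -704266; -683538; 207109; -847269; -709885; 1000000; 0; 0; 0; 0; 0; 0; 0; 0; 0; 0; 0; 0; 0; 0; 0; 0];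
  [:: -987711; 429252; -1000000; -859918; 683099; -995330; 999999; 999786; 676539; 220825; 1000000; 999249; 454006; 1000000; -627210; 621217; -193135; 274577; 428623; -999996; 27930; 440868; 14893; -832656; 1000000; 0; 0; 0; 0; 0; 0; 0; 0; 0; 0; 0; 0; 0; 0; 0];
  [:: 999999; -366090; 701658; 840429; 999997; -999999; 994937; 996841; 952800; -999976; 839522; -918562; 999700; 999789; -999971; 18781; 888522; 946979; 959475; 999914; -670411; -413681; 768408; -488553; 918153; 1000000; 0; 0; 0; 0; 0; 0; 0; 0; 0; 0; 0; 0; 0; 0];
  [:: -339961; 282377; 992321; -1000000; 985932; -991854; -449569; 990099; -944831; -999023; -999997; -955855; -865207; 765070; -912896; 593154; 373154; 869703; 305435; -182170; -479902; -743587; -996729; 760820; 150696; 347917; 1000000; 0; 0; 0; 0; 0; 0; 0; 0; 0; 0; 0; 0; 0];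
  [:: 864291; 726383; 991834; 889563; 940551; 1000000; -999954; -382950; -758539; -544126; 240614; 999261; 999997; -550475; 22714; 284158; -684585; -179201; 305370; 581603; -999787; 54818; 404045; -336336; -259649; 180501; -659038; 1000000; 0; 0; 0; 0; 0; 0; 0; 0; 0; 0; 0; 0];
  [:: 999987; -679933; 999998; 62421; 969531; 998928; -999999; 999962; -1000000; 987846; 999607; -831090; -999999; 501255; -641911; 760857; -567374; 874771; -999060; 238926; -946242; 998387; 458084; -994811; 999948; 549788; -998096; 731531; 1000000; 0; 0; 0; 0; 0; 0; 0; 0; 0; 0; 0];
  [:: -999994; 999989; 416419; -999979; -164075; 999950; -999768; 864507; 715527; -999999; 1000000; -148359; -999522; 653034; -999466; -999999; -364404; -993739; -871388; 999995; 999152; 999906; 34517; 321487; -977422; 291812; 266820; -148497; 160348; 1000000; 0; 0; 0; 0; 0; 0; 0; 0; 0; 0];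
  [:: 1000000; -999974; -999053; -993589; -996503; 867912; -1000000; -982111; 918546; 988440; 999983; -999163; -998330; 999964; 999908; -999640; -999999; 998196; -695731; 984496; 995419; -999930; 819079; 995540; -648056; 999643; 999998; 955892; 486609; 985274; 1000000; 0; 0; 0; 0; 0; 0; 0; 0; 0];
  [:: -294243; -999990; 999949; -992465; -884836; -998021; -708386; -999994; -999882; 936462; -629663; 101919; 966697; 999793; -998958; 686092; -175118; -997168; 811252; 999907; 999993; 850777; -999990; -941916; 999972; -496582; -446381; -943009; -169517; -746367; -678001; 1000000; 0; 0; 0; 0; 0; 0; 0; 0];
  [:: 847509; 963433; -999520; 760130; -231173; 851426; -989406; 68736; 884352; -999996; 999595; -999968; -975274; -999374; 831234; -332340; -337029; -596086; -999013; -259854; 684096; 740796; 948109; -41983; -668961; -14376; -366890; -211981; 458654; 439048; 77308; -530406; 1000000; 0; 0; 0; 0; 0; 0; 0];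
  [:: -998853; -999769; 999886; -567173; 895274; -477640; -976092; 739422; 981045; 1000000; 958516; -964308; -997730; -999970; -912443; -920236; 999986; 914387; 999572; -990097; 908164; 999995; -525904; 999422; -752901; 882482; -999674; 998992; -533520; 998551; 72546; -839212; 298621; 1000000; 0; 0; 0; 0; 0; 0];
  [:: -981425; 628817; -999860; 999995; -998786; 999161; -999995; 888334; -999997; -999917; 997602; 999251; 763468; 999991; -999950; -1000000; -999998; -999984; 187455; -999996; 999995; -999936; -999940; -674455; 999974; 999415; -999418; -910835; -999810; -999848; -693507; -996248; 999732; 947507; 1000000; 0; 0; 0; 0; 0];
  [:: 999991; 996307; -988865; 589699; 999999; -999982; 999981; -999998; 999477; -999995; 999990; -900464; 933202; -999890; -997447; 996933; 999761; -999986; -999459; 853937; 999979; -999911; -988583; 569970; -975463; -997353; -995390; 999736; 999788; -993403; -995019; -728939; -999988; 997869; 992661; 1000000; 0; 0; 0; 0];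
  [:: 986969; 999993; 999995; -999999; -1000000; 999981; -999999; -885712; -999995; 999954; 999069; -999582; 999914; -999981; 999989; 999981; 999786; -999409; 999989; -999911; 817312; -999999; -627446; -998258; 576260; 999958; -998484; -999841; -926289; 999990; -998253; 998628; 845082; -868798; -664542; -709034; 1000000; 0; 0; 0];
  [:: 998312; -999994; 992889; -1000000; 999988; -999997; -912761; 999997; 616420; -996984; 999954; 494961; -998652; -999978; 999633; -871105; 995084; -998272; 999889; -902248; -975330; 545225; -999723; -999982; -999929; 999621; -999902; -999982; 996756; -999981; 999533; -998834; -992566; 639061; 608528; 281599; 873732; 1000000; 0; 0];
  [:: -249493; -999949; -984561; 999998; -999988; 994685; 999991; 993224; 999973; -999685; -998780; 992757; 1000000; 666673; -999187; -1000000; 999931; -999995; -999999; -999935; -995323; -998094; -999971; -999797; -868692; 999474; 745655; -322774; 995313; 789023; 998541; 263813; 999962; 603800; -999899; 829709; -999905; 164107; 1000000; 0];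
  [:: 1000000; -999998; 999981; 996169; -649180; -999878; -999992; -999997; -999994; 999810; 999962; -999996; 999949; -998785; 999821; -999918; -999984; -999892; -999990; -997420; 999990; -991667; -999535; -999918; 999905; 999810; 999577; 999656; -999936; 999956; -999989; -999952; -934986; -999986; -999751; 999992; -999758; 999926; -999688; 1000000]].

Definition tb : seq (seq Z) :=
[::
  [:: 989090; 826; -1835; -1810; -1969; 2168; 5123; 92568; 5522; 220031; -100585; 297058; -920695; -54715; -838633; -830308; 986126; -605793; 951726; 19240; 989039; 968723; -630097; 885880; -208707; -623165; 989005; -446300; -989089; 988737; 399479; -989089; 987249; 667698; 989074; -981217; -989088; -989089; 989088; -989012];
  [:: 0; 989887; 1853; -1288; 1996; -5007; 9314; 43142; -7713; 426703; -308098; 125728; -356534; 270873; -348022; -637919; 989887; -399710; 258509; -360467; 751008; 418464; -777317; -494253; -685393; 989887; 926096; 206152; 989885; -801123; 989887; -676139; -126346; -124885; -989887; 988799; -698332; 989887; -989878; 989521];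
  [:: 0; 0; 989978; 3740; -22; -3040; 17639; -84060; -15818; -108620; 45562; -80933; -10754; 314433; 421720; 170344; -384237; -227156; -379249; -396188; 630508; -731877; 951875; 69391; -989939; -989978; -989943; -984895; 680788; -946039; 890942; -989977; -655688; 879271; 974309; 989964; -989978; -989927; 989971; -989969];
  [:: 0; 0; 0; 990836; 488; -712; -5129; -74795; -8947; 160674; -311023; 193881; -505978; 246935; -474079; 769163; 971666; -967970; 899284; -457839; 983380; -821176; -779053; -887884; -942285; 796559; 965608; -983006; 33292; 990798; 990586; 977855; -990831; -984373; 990836; -990755; 990835; 990002; -990793; -990807];
  [:: 0; 0; 0; 0; 990196; 1123; -16895; -103895; -2163; -227349; -323554; -224206; 657634; 370858; 956519; -990196; 901070; -721380; 755195; -890710; 990196; 942062; 990195; -990091; -103853; -898852; 989804; -953463; 985814; -29914; 755193; 990187; 138993; 956806; 746823; -989529; -990188; -990196; 762358; 990157];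
  [:: 0; 0; 0; 0; 0; 990478; 10377; -3354; 17; -338048; -46741; -599128; 587861; -37136; 701217; -179239; 38996; 182346; 352021; -481686; 303125; 702475; -990221; -769878; 990461; -988784; 978035; 990339; 990384; -395384; -380275; -972888; -989139; -990450; -990433; 990478; 990472; 990477; -990475; 407894];
  [:: 0; 0; 0; 0; 0; 0; 999437; -52570; -23112; -44571; 423287; -410404; -288833; -22020; 435655; -427161; -298330; -320181; 189938; -520172; 969830; 918937; -999437; -564679; -998955; 614940; -965575; -566585; -998981; -969502; -758491; 999433; 999322; -999312; 999335; -999204; -998393; 999437; -999426; 999423];
  [:: 0; 0; 0; 0; 0; 0; 0; 1003523; -3888; 535295; -250129; 122125; -218155; -601189; -519667; 84991; -924764; 52074; 87975; 773972; 345009; -998791; -947845; -959907; -780247; -988872; 1001606; 1003441; -1002274; 831471; -611356; 1003517; 312250; -1003508; -998702; 987824; 1003503; -1003516; -985856; 1003520];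
  [:: 0; 0; 0; 0; 0; 0; 0; 0; 1000034; 142502; -292951; 24470; 252815; -43191; 150578; 806346; -915772; -372036; 832034; -815301; -856490; -999866; -892531; -999473; 1000020; 898269; -999145; 1000001; -1000034; 999934; 243919; 213491; 644604; -996099; 960403; -1000034; -1000020; 999069; -999893; 1000031];
  [:: 0; 0; 0; 0; 0; 0; 0; 0; 0; 1295121; -425104; 275599; -425087; 32519; -500981; -14283; 1283419; -1295119; 823942; -51407; 1076974; -353662; -334668; -67562; -1241342; 136034; 1295098; -1152556; -268591; -1295082; -1295120; -1295112; 1295046; -1083468; 1189167; 1295119; -1279996; 168709; 1295118; -1295120];
  [:: 0; 0; 0; 0; 0; 0; 0; 0; 0; 0; 1096913; -106851; 67739; 330502; 507204; 603691; 319970; 617562; -1096906; 778135; -561133; -515735; -280223; 1096895; 743309; -1096751; 1096911; -1025081; -906109; 1096827; 1078526; 1096913; 1096904; -414963; -1096912; -1091559; -1096738; -1096909; 1081483; -1096898];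
  [:: 0; 0; 0; 0; 0; 0; 0; 0; 0; 0; 0; 1190787; -547628; 243555; -58814; 179831; 1081911; 65173; -694987; 1190787; 1172730; -1190633; 1190631; -121705; 797626; 1179658; 1179903; 934981; 1173236; 1190787; -1190764; -681741; -150396; -1190644; -1190265; 1187054; 1140498; 1190614; -1190786; 1190628];
  [:: 0; 0; 0; 0; 0; 0; 0; 0; 0; 0; 0; 0; 1412704; -318489; 705086; -581704; -855420; 1376940; -893022; 357201; -1034355; 1412688; -137097; 1411100; 872343; -770572; -1314836; -1408245; 1412653; 31664; -1327749; -1411989; -1412689; -1412535; 1412703; -1412694; -1401889; 1411894; -1412688; -1412703];
  [:: 0; 0; 0; 0; 0; 0; 0; 0; 0; 0; 0; 0; 0; 1265454; 656289; -425122; 1265446; -994209; 390416; -1265357; 936172; 1139758; 232892; 1265453; -1145545; -1257388; -753465; -1246767; -1234447; -813439; -1264616; -1074122; 1155191; -1185813; -1265207; -1265451; 1265454; 1264893; -1264761; 1250241];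
  [:: 0; 0; 0; 0; 0; 0; 0; 0; 0; 0; 0; 0; 0; 0; 1536932; 44189; -336822; 93253; -346210; -158487; 265060; -299187; -1518383; -1365270; 1518193; 789467; -901964; 1293492; 387256; 1163057; -1536928; 1495263; 1535885; 1536932; -533568; 1536815; -1536836; -1536377; 769952; -1536731];
  [:: 0; 0; 0; 0; 0; 0; 0; 0; 0; 0; 0; 0; 0; 0; 0; 2390341; -1463163; 194504; -252358; -34886; -924100; -2099353; -97807; -198306; -1749310; 2388907; -1724809; 67202; -2137166; -2382485; 1535232; -2390213; 434079; 2052519; -2389878; 2390329; -2390259; 2390291; 2349018; 2390149];
  [:: 0; 0; 0; 0; 0; 0; 0; 0; 0; 0; 0; 0; 0; 0; 0; 0; 2612812; -112377; -1361875; 946775; 1516794; 641022; 2050273; 395726; 2595955; 586574; 2611888; 2407571; 1780708; -2612758; 1587066; -1195276; 1302898; -2242804; 2612791; 2597227; -2612809; 2598631; -2612746; 2612755];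
  [:: 0; 0; 0; 0; 0; 0; 0; 0; 0; 0; 0; 0; 0; 0; 0; 0; 0; 2113169; -1666046; 1052635; -467722; 410654; -2113164; -2083405; -871388; -1959051; 1762702; -2110844; -2111455; 537481; -2113167; 2066600; 504128; -1200532; -2108403; 2113087; 2047027; 2111329; 2113167; 2113121];
  [:: 0; 0; 0; 0; 0; 0; 0; 0; 0; 0; 0; 0; 0; 0; 0; 0; 0; 0; 2319804; -723681; 174886; -230544; -1263833; -448870; -1470999; -1447000; 1698275; 535070; 2310846; 2307924; -2319665; -2291346; -1851257; -2286067; -2319804; 2319802; -2319667; -2019068; 1944288; 2319222];
  [:: 0; 0; 0; 0; 0; 0; 0; 0; 0; 0; 0; 0; 0; 0; 0; 0; 0; 0; 0; 1901444; 269131; -1180690; -1879241; -1900436; 1421507; 1901396; 1340969; 1795850; -1845534; 1900249; 1901440; -1900579; 1898023; -1518054; -1863853; -1871663; 1745867; -1095204; 1900222; 1901426];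
  [:: 0; 0; 0; 0; 0; 0; 0; 0; 0; 0; 0; 0; 0; 0; 0; 0; 0; 0; 0; 0; 2571655; 164659; 928274; -2367571; -2570585; -1104561; 1726618; -533010; 2571650; -2564727; 2571483; 1135324; -1875055; -1970038; -2571524; -2571207; -683741; -2367750; 2571124; -2571476];
  [:: 0; 0; 0; 0; 0; 0; 0; 0; 0; 0; 0; 0; 0; 0; 0; 0; 0; 0; 0; 0; 0; 2682828; -1923086; 1274887; 1655704; 2682807; -834448; 639224; 404085; -1174182; -2655988; 2229329; 2682433; -2682706; 2393821; 2681858; 2633178; -2680428; 2680540; 2682752];
  [:: 0; 0; 0; 0; 0; 0; 0; 0; 0; 0; 0; 0; 0; 0; 0; 0; 0; 0; 0; 0; 0; 0; 6000389; 1616306; -2051339; -1294433; -858982; -1479014; 1912735; -5715564; -3322187; 360482; -1485536; 6000290; -5863428; 5995003; 5999666; 6000274; 6000309; 6000355];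
  [:: 0; 0; 0; 0; 0; 0; 0; 0; 0; 0; 0; 0; 0; 0; 0; 0; 0; 0; 0; 0; 0; 0; 0; 4402874; 4320506; 4382002; -3464333; 831619; 4401892; 3852154; -2239004; -2662777; -3807164; -3858742; -4399593; 3645135; 4398954; 4396671; 4401594; 4402782];
  [:: 0; 0; 0; 0; 0; 0; 0; 0; 0; 0; 0; 0; 0; 0; 0; 0; 0; 0; 0; 0; 0; 0; 0; 0; 6744824; 3263118; -332292; 5212254; 6714622; 6450054; 6425907; -6563229; -6712278; 3418347; 1523613; 1976504; 6744805; 460189; 6738955; -6744721];
  [:: 0; 0; 0; 0; 0; 0; 0; 0; 0; 0; 0; 0; 0; 0; 0; 0; 0; 0; 0; 0; 0; 0; 0; 0; 0; 7670412; -3135927; 333693; 1083933; -6900360; -7649607; 7667460; 3752704; -3445424; -2137047; 2965050; -4991124; -7666654; -7587794; -7670275];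
  [:: 0; 0; 0; 0; 0; 0; 0; 0; 0; 0; 0; 0; 0; 0; 0; 0; 0; 0; 0; 0; 0; 0; 0; 0; 0; 0; 4140560; 286377; 1907014; -4139989; -3853766; 1995398; 4140465; 3259871; 4108768; -4140552; 4136306; 4046094; 4138456; -4126847];
  [:: 0; 0; 0; 0; 0; 0; 0; 0; 0; 0; 0; 0; 0; 0; 0; 0; 0; 0; 0; 0; 0; 0; 0; 0; 0; 0; 0; 4771515; 852288; -2892277; 1602798; 4766477; 4756370; -4735105; 4770143; -4769061; 2990550; 4759172; 4771393; -4753475];
  [:: 0; 0; 0; 0; 0; 0; 0; 0; 0; 0; 0; 0; 0; 0; 0; 0; 0; 0; 0; 0; 0; 0; 0; 0; 0; 0; 0; 0; 10186000; 4536785; -8441340; -3253064; -7254656; -5141619; -2793453; -10183299; -10185961; 10020415; -10176943; 10185035];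
  [:: 0; 0; 0; 0; 0; 0; 0; 0; 0; 0; 0; 0; 0; 0; 0; 0; 0; 0; 0; 0; 0; 0; 0; 0; 0; 0; 0; 0; 0; 9926956; 2697504; -9895541; -8295791; 9096188; 9926834; 9767670; -5578576; 9804098; 9922576; -9923350];
  [:: 0; 0; 0; 0; 0; 0; 0; 0; 0; 0; 0; 0; 0; 0; 0; 0; 0; 0; 0; 0; 0; 0; 0; 0; 0; 0; 0; 0; 0; 0; 20501424; -6584591; -4148146; -1053865; 6367595; 6704346; -837362; -20183480; -20496629; 20500631];
  [:: 0; 0; 0; 0; 0; 0; 0; 0; 0; 0; 0; 0; 0; 0; 0; 0; 0; 0; 0; 0; 0; 0; 0; 0; 0; 0; 0; 0; 0; 0; 0; 15141751; 2098737; 5365789; 5620491; 15141380; 1228911; 15141421; -14197831; 15111219];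
  [:: 0; 0; 0; 0; 0; 0; 0; 0; 0; 0; 0; 0; 0; 0; 0; 0; 0; 0; 0; 0; 0; 0; 0; 0; 0; 0; 0; 0; 0; 0; 0; 0; 6761149; -6740909; 6676636; 6747502; 6760861; 6710867; -6760303; -292384];
  [:: 0; 0; 0; 0; 0; 0; 0; 0; 0; 0; 0; 0; 0; 0; 0; 0; 0; 0; 0; 0; 0; 0; 0; 0; 0; 0; 0; 0; 0; 0; 0; 0; 0; 24512228; -11320043; -15094831; 12542728; 24257376; -24498711; 24507230];
  [:: 0; 0; 0; 0; 0; 0; 0; 0; 0; 0; 0; 0; 0; 0; 0; 0; 0; 0; 0; 0; 0; 0; 0; 0; 0; 0; 0; 0; 0; 0; 0; 0; 0; 0; 33353082; 33255054; -28576983; 16342285; 32854701; 33352831];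
  [:: 0; 0; 0; 0; 0; 0; 0; 0; 0; 0; 0; 0; 0; 0; 0; 0; 0; 0; 0; 0; 0; 0; 0; 0; 0; 0; 0; 0; 0; 0; 0; 0; 0; 0; 0; 54627115; 47992987; -54621788; -21244385; -54615699];
  [:: 0; 0; 0; 0; 0; 0; 0; 0; 0; 0; 0; 0; 0; 0; 0; 0; 0; 0; 0; 0; 0; 0; 0; 0; 0; 0; 0; 0; 0; 0; 0; 0; 0; 0; 0; 0; 54259687; -22983578; -17051103; 54252363];
  [:: 0; 0; 0; 0; 0; 0; 0; 0; 0; 0; 0; 0; 0; 0; 0; 0; 0; 0; 0; 0; 0; 0; 0; 0; 0; 0; 0; 0; 0; 0; 0; 0; 0; 0; 0; 0; 0; 94006096; 70732339; -93991960];
  [:: 0; 0; 0; 0; 0; 0; 0; 0; 0; 0; 0; 0; 0; 0; 0; 0; 0; 0; 0; 0; 0; 0; 0; 0; 0; 0; 0; 0; 0; 0; 0; 0; 0; 0; 0; 0; 0; 0; 121850225; 121849607];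
  [:: 0; 0; 0; 0; 0; 0; 0; 0; 0; 0; 0; 0; 0; 0; 0; 0; 0; 0; 0; 0; 0; 0; 0; 0; 0; 0; 0; 0; 0; 0; 0; 0; 0; 0; 0; 0; 0; 0; 0; 504980137]].

Definition zget (t : seq (seq Z)) (i j : nat) : Z := nth 0 (nth [::] t i) j.
Definition za := zget ta.
Definition zb := zget tb.
Definition zsum (f : nat -> Z) (k : nat) : Z := foldr (fun l acc => f l + acc) 0 (iota 0 k).
Definition zD : Z := 1000000.
Definition zC : Z := 1000000.
Definition zG : Z := 473.
Definition z40 : Z := 40.
Definition Pij (i j : nat) : bool :=
  [&& (if (i < j)%N then Z.eqb (za i j) 0 else true),
      (if (j < i)%N then Z.eqb (zb i j) 0 else true),
      Z.leb (Z.abs (za i j)) zD,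
      Z.leb (Z.abs (zb i j)) (Z.abs (zb i i)) &
      Z.leb (Z.abs (zsum (fun l => za i l * zb l j) 40)) (zD * zC)].
Definition Pi (i : nat) : bool := Z.eqb (za i i) zD && negb (Z.eqb (zb i i) 0).
Definition chk : bool :=
  [&& all (fun i => all (Pij i) (iota 0 40)) (iota 0 40),
      all Pi (iota 0 40) & Z.leb (zG * zC) (Z.abs (zb 39 39))].
Lemma chk_ok : chk = true.
Proof. vm_compute. reflexivity. Qed.
End Tab.


Local Open Scope ring_scope.
Set Implicit Arguments. Unset Strict Implicit. Unset Printing Implicit Defensive.

Section LU.
Variable R : realType.

Definition mulf (n : nat) (L U : nat -> nat -> R) (i j : nat) : R :=
  \sum_(l < n) L i l * U l j.
Definition mkA (n : nat) (L U : nat -> nat -> R) : 'M[R]_n :=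
  \matrix_(i, j) mulf n L U i j.

Lemma split_sum n (F : nat -> R) (p : 'I_n) :
  \sum_(l < n | (p <= l)%N) F l = F p + \sum_(l < n | (p < l)%N) F l.
Proof.
rewrite (bigD1 p) //=; congr (_ + _); apply: eq_bigl => l.
by rewrite ltn_neqAle andbC eq_sym.
Qed.

Section GE.
Variables (n : nat) (L U : nat -> nat -> R).
Hypothesis L_up : forall i j, (i < n)%N -> (j < n)%N -> (i < j)%N -> L i j = 0.
Hypothesis L_diag : forall i, (i < n)%N -> L i i = 1.
Hypothesis U_low : forall i j, (i < n)%N -> (j < n)%N -> (j < i)%N -> U i j = 0.
Hypothesis U_diag : forall i, (i < n)%N -> U i i != 0.

Lemma ge_iterE k (i j : 'I_n) : (k <= i)%N -> (k <= j)%N ->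
  ge_iter (mkA n L U) k i j = \sum_(l < n | (k <= l)%N) L i l * U l j.
Proof.
elim: k i j => [|k IH] i j ki kj.
  by rewrite /= mxE /mulf; apply: eq_bigl => l.
have kn : (k < n)%N := ltn_trans ki (ltn_ord i).
rewrite /= /ge_step (insubT (fun m => (m < n)%N) kn) mxE /=.
set p : 'I_n := Sub k kn.
have pk : nat_of_ord p = k by [].
rewrite ki kj /=.
have ki' : (k <= i)%N by apply: ltnW.
have kj' : (k <= j)%N by apply: ltnW.
rewrite !IH // -?pk ?leqnn //.
rewrite (split_sum (fun l => L i l * U l j)) (split_sum (fun l => L i l * U l p)) (split_sum (fun l => L p l * U l j)) (split_sum (fun l => L p l * U l p)).
have Z1 : \sum_(l < n | (p < l)%N) L p l * U l p = 0.
  by apply: big1 => l pl; rewrite L_up ?mul0r.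
have Z2 : \sum_(l < n | (p < l)%N) L i l * U l p = 0.
  by apply: big1 => l pl; rewrite U_low ?mulr0.
have Z3 : \sum_(l < n | (p < l)%N) L p l * U l j = 0.
  by apply: big1 => l pl; rewrite L_up ?mul0r.
rewrite Z1 Z2 Z3 !addr0 L_diag // mul1r.
have Up := U_diag (ltn_ord p).
rewrite mul1r mulrAC mulfK //.
by rewrite addrC addKr.
Qed.
Hypothesis L_le1 : forall i j, (i < n)%N -> (j < n)%N -> `|L i j| <= 1.
Hypothesis U_dom : forall i j, (i < n)%N -> (j < n)%N -> `|U i j| <= `|U i i|.
Hypothesis A_le1 : forall i j, (i < n)%N -> (j < n)%N -> `|mulf n L U i j| <= 1.

Lemma pivotE (k : 'I_n) : ge_iter (mkA n L U) k k k = U k k.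
Proof.
rewrite ge_iterE // (split_sum (fun l => L k l * U l k)) big1 ?addr0 ?L_diag ?mul1r //.
by move=> l kl; rewrite L_up ?mul0r.
Qed.

Lemma colE (k i : 'I_n) : (k <= i)%N -> ge_iter (mkA n L U) k i k = L i k * U k k.
Proof.
move=> ki; rewrite ge_iterE // (split_sum (fun l => L i l * U l k)) big1 ?addr0 //.
by move=> l kl; rewrite U_low ?mulr0.
Qed.

Lemma rowE (k j : 'I_n) : (k <= j)%N -> ge_iter (mkA n L U) k k j = U k j.
Proof.
move=> kj; rewrite ge_iterE // (split_sum (fun l => L k l * U l j)) big1 ?addr0 ?L_diag ?mul1r //.
by move=> l kl; rewrite L_up ?mul0r.
Qed.

Lemma mkA_unit : mkA n L U \in unitmx.
Proof.
have -> : mkA n L U = (\matrix_(i < n, j < n) L i j) *m (\matrix_(i < n, j < n) U i j).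
  by apply/matrixP => i j; rewrite !mxE /mulf; apply: eq_bigr => l _; rewrite !mxE.
rewrite unitmxE det_mulmx -[X in _ * \det X]trmxK det_tr !det_trig.
- rewrite unitfE mulf_neq0 //; apply/prodf_neq0 => i _; rewrite !mxE.
    by rewrite L_diag // oner_neq0.
  exact: U_diag.
- by apply/is_trig_mxP => i j ij; rewrite !mxE U_low.
- by apply/is_trig_mxP => i j ij; rewrite !mxE L_up.
Qed.

Lemma rook_mkA : rook_pivoted (mkA n L U).
Proof.
split; first exact: mkA_unit.
split; first by move=> k; rewrite pivotE U_diag.
move=> k; split => [i ki|j kj].
  by rewrite colE // pivotE normrM ler_piMl // L_le1.
by rewrite rowE // pivotE U_dom.
Qed.

Lemma growth_mkA (k : 'I_n) : `|U k k| <= growth_factor (mkA n L U).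
Proof.
have n0 : (0 < n)%N by apply: leq_ltn_trans (ltn_ord k).
set A := mkA n L U.
have me_le1 : max_entry A <= 1.
  apply: bigmax_le => // i _; apply: bigmax_le => // j _.
  by rewrite mxE A_le1.
have me_gt0 : 0 < max_entry A.
  have i0 : 'I_n := Ordinal n0.
  apply: (@lt_le_trans _ _ `|A (Ordinal n0) (Ordinal n0)|).
    have -> : A (Ordinal n0) (Ordinal n0) = U 0 0 by exact: (pivotE (Ordinal n0)).
    by rewrite normr_gt0 U_diag.
  apply: (bigmax_sup (Ordinal n0)) => //.
  exact: (bigmax_sup (Ordinal n0)).
have mas : `|U k k| <= max_all_stages A.
  apply: (bigmax_sup k) => //; apply: (bigmax_sup k) => //.
  apply: (bigmax_sup k) => //.
  by rewrite pivotE.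
have mas0 : 0 <= max_all_stages A by apply: le_trans mas.
rewrite /growth_factor.
apply: (le_trans mas).
by rewrite ler_pdivlMr // ler_piMr.
Qed.
End GE.

Record good (N : nat) (L U : nat -> nat -> R) (g : R) : Prop := Good {
  gN : (0 < N)%N;
  gg0 : 0 <= g;
  gg : g <= `|U N.-1 N.-1|;
  gLup : forall i j, (i < N)%N -> (j < N)%N -> (i < j)%N -> L i j = 0;
  gLd : forall i, (i < N)%N -> L i i = 1;
  gUlow : forall i j, (i < N)%N -> (j < N)%N -> (j < i)%N -> U i j = 0;
  gUd : forall i, (i < N)%N -> U i i != 0;
  gL1 : forall i j, (i < N)%N -> (j < N)%N -> `|L i j| <= 1;
  gUdom : forall i j, (i < N)%N -> (j < N)%N -> `|U i j| <= `|U i i|;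
  gA1 : forall i j, (i < N)%N -> (j < N)%N -> `|mulf N L U i j| <= 1 }.

Lemma good_growth N L U g : good N L U g ->
  rook_pivoted (mkA N L U) /\ g <= growth_factor (mkA N L U).
Proof.
case=> N0 g0 gU Lup Ld Ulow Ud L1 Udom A1; split.
  exact: rook_mkA.
have kN : (N.-1 < N)%N by rewrite ltn_predL.
apply: (le_trans gU).
exact: (growth_mkA Lup Ld Ulow Ud A1 (Ordinal kN)).
Qed.


Lemma sum_tens m p (f g : nat -> R) : (0 < p)%N ->
  \sum_(l < m * p) f (l %/ p)%N * g (l %% p)%N = (\sum_(a < m) f a) * (\sum_(b < p) g b).
Proof.
move=> p0; elim: m => [|m IH]; first by rewrite mul0n !big_ord0 mul0r.
rewrite mulSnr big_split_ord /= IH big_ord_recr /= mulrDl; congr (_ + _).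
rewrite big_distrr /=; apply: eq_bigr => b _.
have -> : ((m * p + b) %/ p)%N = m by rewrite divnMDl // divn_small // addn0.
by have -> : ((m * p + b) %% p)%N = b by rewrite modnMDl modn_small.
Qed.

Definition tens (p : nat) (F G : nat -> nat -> R) (i j : nat) : R :=
  F (i %/ p)%N (j %/ p)%N * G (i %% p)%N (j %% p)%N.

Lemma good_tens m p L1 U1 g1 L2 U2 g2 :
  good m L1 U1 g1 -> good p L2 U2 g2 ->
  good (m * p) (tens p L1 L2) (tens p U1 U2) (g1 * g2).
Proof.
case=> m0 g10 gU1 Lup1 Ld1 Ulow1 Ud1 L11 Udom1 A11.
case=> p0 g20 gU2 Lup2 Ld2 Ulow2 Ud2 L12 Udom2 A12.
have dv : forall i, (i < m * p)%N -> (i %/ p < m)%N by move=> i; rewrite ltn_divLR.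
have md : forall i, (i %% p < p)%N by move=> i; rewrite ltn_pmod.
have ord1 : forall i j, (i < j)%N -> (i %/ p < j %/ p)%N \/
     ((i %/ p)%N = (j %/ p)%N /\ (i %% p < j %% p)%N).
  move=> i j ij; have := divn_eq i p; have := divn_eq j p.
  have := leq_div2r p (ltnW ij).
  case: (ltngtP (i %/ p)%N (j %/ p)%N) => [h|h|h]; first by left.
    by move=> /=; lia.
  by right; split => //; lia.
constructor.
- by rewrite muln_gt0 m0.
- exact: mulr_ge0.
- have -> : (m * p).-1 = m.-1 * p + p.-1 by nia.
  rewrite /tens divnMDl // divn_small ?addn0 ?modnMDl ?modn_small ?ltn_predL //.
  by rewrite normrM ler_pM.
- move=> i j im jm ij; rewrite /tens; case: (ord1 _ _ ij) => [h|[h1 h2]].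
    by rewrite Lup1 ?mul0r // dv.
  by rewrite Lup2 ?mulr0.
- by move=> i im; rewrite /tens Ld1 ?Ld2 ?mulr1 ?dv.
- move=> i j im jm ij; rewrite /tens; case: (ord1 _ _ ij) => [h|[h1 h2]].
    by rewrite Ulow1 ?mul0r // dv.
  by rewrite Ulow2 ?mulr0.
- by move=> i im; rewrite /tens mulf_neq0 ?Ud1 ?Ud2 ?dv.
- move=> i j im jm; rewrite /tens normrM mulr_ile1 ?normr_ge0 //.
    by rewrite L11 ?dv.
  by rewrite L12.
- move=> i j im jm; rewrite /tens !normrM ler_pM ?normr_ge0 //.
    by rewrite Udom1 ?dv.
  by rewrite Udom2.
- move=> i j im jm; rewrite /mulf /tens.
  under eq_bigr => l _ do rewrite mulrACA.
  rewrite (@sum_tens m p (fun a => L1 (i %/ p)%N a * U1 a (j %/ p)%N)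
                    (fun b => L2 (i %% p)%N b * U2 b (j %% p)%N)) //.
  rewrite normrM mulr_ile1 ?normr_ge0 //.
    by have := A11 (i %/ p)%N (j %/ p)%N (dv _ im) (dv _ jm).
  by have := A12 (i %% p)%N (j %% p)%N (md i) (md j).
Qed.


Definition shift (F : nat -> nat -> R) (i j : nat) : R :=
  match i, j with
  | 0, 0 => 1
  | 0, _ => 0
  | _, 0 => 0
  | i'.+1, j'.+1 => F i' j'
  end.

Lemma mulf_shift N L U i j :
  mulf N.+1 (shift L) (shift U) i.+1 j.+1 = mulf N L U i j.
Proof. by rewrite /mulf big_ord_recl /= mul0r add0r. Qed.

Lemma good_shift N L U g : good N L U g -> good N.+1 (shift L) (shift U) g.
Proof.
case=> N0 g0 gU Lup Ld Ulow Ud L1 Udom A1.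
constructor => //.
- move: N0 gU; case: (N) => //.
- by move=> [|i] [|j] //= im jm ij; apply: Lup.
- by move=> [|i] //= im; apply: Ld.
- by move=> [|i] [|j] //= im jm ij; apply: Ulow.
- move=> [|i] im /=; [exact: oner_neq0 | exact: Ud].
- by move=> [|i] [|j] //= im jm; rewrite ?normr1 ?normr0 ?ler01 // L1.
- by move=> [|i] [|j] //= im jm; rewrite ?normr1 ?normr0 ?ler01 ?normr_ge0 // Udom.
- move=> [|i] [|j] im jm.
  + rewrite /mulf big_ord_recl /= mulr1 big1 ?addr0 ?normr1 // => l _.
    by rewrite mul0r.
  + rewrite /mulf big_ord_recl /= mulr0 add0r big1 ?normr0 ?ler01 // => l _.
    by rewrite mul0r.
  + rewrite /mulf big_ord_recl /= mul0r add0r big1 ?normr0 ?ler01 // => l _.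
    by rewrite mulr0.
  + by rewrite mulf_shift A1.
Qed.

Lemma good_pad r N L U g : good N L U g ->
  good (r + N) (iter r shift L) (iter r shift U) g.
Proof. by move=> h; elim: r => [|r IH] //=; exact: good_shift. Qed.

Definition one2 (i j : nat) : R := 1.

Lemma good_one : good 1 one2 one2 1.
Proof.
constructor => //; try by move=> [|i] [|j].
- by rewrite /one2 normr1.
- by move=> [|i] //; rewrite /one2 oner_neq0.
- by move=> [|i] [|j] // _ _; rewrite /one2 normr1.
- by move=> [|i] [|j] // _ _; rewrite /mulf big_ord1 /one2 mulr1 normr1.
Qed.

Fixpoint powL (m : nat) (F : nat -> nat -> R) (k : nat) : nat -> nat -> R :=
  if k is k'.+1 then tens (m ^ k') F (powL m F k') else one2.

Lemma good_pow m L U g k : good m L U g ->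
  good (m ^ k) (powL m L k) (powL m U k) (g ^+ k).
Proof.
move=> h; elim: k => [|k IH] /=; first exact: good_one.
by rewrite expnS exprS; apply: good_tens.
Qed.

End LU.

Section Base.
Variable R : realType.
Definition phi (z : Z) : R := (int_of_Z z)%:~R.
Lemma phiM a b : phi (a * b)%Z = phi a * phi b.
Proof. by rewrite /phi -intrM -rmorphM. Qed.
Lemma phiD a b : phi (a + b)%Z = phi a + phi b.
Proof. by rewrite /phi -intrD -rmorphD. Qed.
Lemma phi0 : phi Z0 = 0. Proof. by []. Qed.
Lemma phi_le a b : Z.leb a b -> phi a <= phi b.
Proof.
move=> /Z.leb_le h; rewrite /phi ler_int.
have := int_of_ZK a; have := int_of_ZK b; lia.
Qed.
Lemma phi_abs a : `|phi a| = phi (Z.abs a).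
Proof.
rewrite /phi -intr_norm; congr intmul.
have := int_of_ZK a; have := int_of_ZK (Z.abs a); lia.
Qed.
Lemma phi_eq0 a : phi a = 0 -> a = Z0.
Proof.
move/eqP; rewrite /phi intr_eq0 => /eqP h.
by rewrite -(int_of_ZK a) h.
Qed.
Lemma phi_sum (f : nat -> Z) k : phi (Tab.zsum f k) = \sum_(l < k) phi (f l).
Proof.
rewrite -(big_mkord xpredT (fun l => phi (f l))) /index_iota subn0 /Tab.zsum.
elim: (iota 0 k) => [|x s IH]; first by rewrite big_nil.
by rewrite big_cons /= phiD IH.
Qed.

Lemma phiD_gt0 : 0 < phi Tab.zD.
Proof. by rewrite /phi ltr0z. Qed.
Lemma phiC_gt0 : 0 < phi Tab.zC.
Proof. by rewrite /phi ltr0z. Qed.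

Definition Lb (i j : nat) : R := phi (Tab.za i j) / phi Tab.zD.
Definition Ub (i j : nat) : R := phi (Tab.zb i j) / phi Tab.zC.

Lemma Pij_ok i j : (i < 40)%N -> (j < 40)%N -> Tab.Pij i j.
Proof.
move=> hi hj; have := Tab.chk_ok; rewrite /Tab.chk => /and3P [H1 _ _].
have hi' : i \in iota 0 40 by rewrite mem_iota.
have hj' : j \in iota 0 40 by rewrite mem_iota.
exact: (allP (allP H1 i hi') j hj').
Qed.

Lemma Pi_ok i : (i < 40)%N -> Tab.Pi i.
Proof.
move=> hi; have := Tab.chk_ok; rewrite /Tab.chk => /and3P [_ H2 _].
by apply: (allP H2); rewrite mem_iota.
Qed.

Lemma good_base : good 40 Lb Ub (phi Tab.zG).
Proof.
have D0 := phiD_gt0; have C0 := phiC_gt0.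
have D1 : 0 < (phi Tab.zD)^-1 by rewrite invr_gt0 D0.
have DC : 0 < phi Tab.zD * phi Tab.zC := mulr_gt0 D0 C0.
constructor => //.
- have H3 : Z.leb (Tab.zG * Tab.zC) (Z.abs (Tab.zb 39 39)).
    by have := Tab.chk_ok; rewrite /Tab.chk => /and3P [_ _ H3].
  change (40.-1)%N with 39%N.
  have C1 : 0 < (phi Tab.zC)^-1 by rewrite invr_gt0 C0.
  rewrite /Ub normrM (gtr0_norm C1) (ler_pdivlMr _ _ C0) phi_abs -phiM.
  exact: phi_le.
- move=> i j hi hj ij; have := Pij_ok hi hj; rewrite /Tab.Pij ij.
  by rewrite /Lb; case/and5P => /Z.eqb_eq -> _ _ _ _; rewrite phi0 mul0r.
- move=> i hi; have := Pi_ok hi; case/andP => /Z.eqb_eq h _.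
  by rewrite /Lb h divff ?(gt_eqF D0).
- move=> i j hi hj ij; have := Pij_ok hi hj; rewrite /Tab.Pij ij.
  by rewrite /Ub; case/and5P => _ /Z.eqb_eq -> _ _ _; rewrite phi0 mul0r.
- move=> i hi; have := Pi_ok hi; case/andP => _ h.
  rewrite /Ub; apply: mulf_neq0; last by rewrite invr_eq0 (gt_eqF C0).
  by apply/eqP => /phi_eq0 e; move: h; rewrite e.
- move=> i j hi hj; have := Pij_ok hi hj; case/and5P => _ _ h _ _.
  rewrite /Lb normrM (gtr0_norm D1) (ler_pdivrMr _ _ D0) mul1r phi_abs.
  exact: phi_le.
- move=> i j hi hj; have := Pij_ok hi hj; case/and5P => _ _ _ h _.
  rewrite /Ub !normrM ler_wpM2r ?normr_ge0 // !phi_abs.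
  exact: phi_le.
- move=> i j hi hj; have := Pij_ok hi hj; case/and5P => _ _ _ _ h.
  rewrite /mulf /Lb /Ub.
  under eq_bigr => l _ do rewrite mulrACA.
  rewrite -big_distrl /=.
  under eq_bigr => l _ do rewrite -phiM.
  rewrite -(phi_sum (fun l => (Tab.za i l * Tab.zb l j)%Z)) -invfM normrM normfV (gtr0_norm DC).
  rewrite (ler_pdivrMr _ _ DC) mul1r phi_abs -phiM.
  exact: phi_le.
Qed.
End Base.

Lemma chk_pow : Z.leb (Tab.z40 ^+ 1669) (Tab.zG ^+ 1000).
Proof. vm_compute. reflexivity. Qed.

Section Numeric.
Variable R : realType.

Lemma phiX (z : Z) k : phi R (z ^+ k) = phi R z ^+ k.
Proof. by rewrite /phi rmorphXn /= rmorphXn. Qed.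

Lemma pow40 : (40%:R : R) `^ (1669%:R / 1000%:R) <= 473%:R.
Proof.
set a : R := 1669%:R / 1000%:R.
set y := (40%:R : R) `^ a.
have y0 : 0 <= y by apply: powR_ge0.
rewrite -(@ler_pXn2r _ 1000) ?nnegrE ?ler0n //.
have -> : y ^+ 1000 = (40%:R : R) ^+ 1669.
  rewrite -powR_mulrn // -powRrM.
  have -> : a * 1000%:R = 1669%:R :> R.
    by rewrite /a mulfVK ?pnatr_eq0.
  by rewrite powR_mulrn ?ler0n.
have := phi_le R chk_pow; rewrite !phiX.
have -> : phi R Tab.z40 = 40%:R by [].
by have -> : phi R Tab.zG = 473%:R by [].
Qed.

Lemma final_ineq (n k : nat) : (0 < n)%N -> (n < 40 ^ k.+1)%N ->
  (n%:R : R) `^ (1669%:R / 1000%:R) / 641%:R < 473%:R ^+ k.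
Proof.
move=> n0 nk.
set a : R := 1669%:R / 1000%:R.
have a0 : 0 < a by rewrite /a divr_gt0 ?ltr0n.
rewrite ltr_pdivrMr ?ltr0n //.
apply: (@lt_le_trans _ _ ((40%:R ^+ k.+1) `^ a)).
  apply: gt0_ltr_powR => //; rewrite ?nnegrE ?ler0n ?exprn_ge0 //.
  by rewrite -natrX ltr_nat.
rewrite -powR_mulrn ?ler0n // powRAC powR_mulrn ?powR_ge0 //.
apply: (@le_trans _ _ ((473%:R : R) ^+ k.+1)).
  by apply: lerXn2r; rewrite ?nnegrE ?powR_ge0 ?ler0n // pow40.
rewrite exprS mulrC ler_pM2l ?exprn_gt0 ?ltr0n //.
by rewrite ler_nat.
Qed.
End Numeric.

Theorem theorem1p2 (R : realType) (n : nat) (hn : (1 <= n)%N) :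
  (((n%:R `^ (1669%:R / 1000%:R)) / 641%:R)%:E < growth_RP R n)%E.
Proof.
set k := trunc_log 40 n.
have kn : (40 ^ k <= n)%N by apply: trunc_logP.
have nk : (n < 40 ^ k.+1)%N by apply: trunc_log_ltn.
have G := good_pad (n - 40 ^ k) (good_pow k (good_base R)).
rewrite subnK // in G.
have [rk gr] := good_growth G.
apply: (@lt_le_trans _ _ (growth_factor (mkA n (iter (n - 40 ^ k) (shift (R:=R)) (powL 40 (Lb R) k))
                                              (iter (n - 40 ^ k) (shift (R:=R)) (powL 40 (Ub R) k))))%:E).
  rewrite lte_fin; apply: (lt_le_trans (final_ineq R hn nk)).
  apply: le_trans gr.
  by have -> : phi R Tab.zG = 473%:R by [].
by apply: ereal_sup_ubound; eexists; first exact: rk.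
Qed.
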